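(* Every finite Frobenius group and every finite extra-special group is a generalized B-group.
   Context: For a finite group $G$ with identity $e$ and $X\subseteq G$, write $\underline{X}=\sum_{x\in X}x\in\mathbb{Z}G$. A subring $\mathcal{A}$ of $\mathbb{Z}G$ is an S-ring over $G$ if there is a partition $\mathcal{S}(\mathcal{A})$ of $G$ (basic sets) such that $\{e\}\in\mathcal{S}(\mathcal{A})$, $X\in\mathcal{S}(\mathcal{A})\Rightarrow X^{-1}\in\mathcal{S}(\mathcal{A})$, and $\mathcal{A}$ is the $\mathbb{Z}$-span of $\{\underline{X}: X\in\mathcal{S}(\mathcal{A})\}$. An $\mathcal{A}$-subgroup is a subgroup of $G$ that is a union of basic sets; $\mathcal{A}$ is primitive if its only $\mathcal{A}$-subgroups are $\{e\}$ and $G$. $\mathcal{A}$ is central if $\mathcal{A}\subseteq\mathcal{Z}(\mathbb{Z}G)$. The trivial S-ring is $\mathbb{Z}e+\mathbb{Z}\underline{G}$. A central S-ring over $G$ is proper if it is different from both $\mathcal{Z}(\mathbb{Z}G)$ and the trivial S-ring. A finite group $G$ is a generalized B-group if no proper central S-ring over $G$ is primitive. *)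

(* Defs.v *)
From HB Require Import structures.
From mathcomp Require Import all_boot all_order all_fingroup all_solvable.
Set Implicit Arguments. Unset Strict Implicit. Unset Printing Implicit Defensive.

Local Open Scope group_scope.

(* An S-ring over G is determined by its partition P of G into basic sets.
   The Z-span of {sum X : X in P} is a subring of ZG iff it contains e
   ([set 1] \in P) and is closed under products, i.e. for all basic sets
   X, Y the coefficient of z in (sum X)(sum Y), namely
   #{(x,y) in X*Y | x*y = z}, is constant as z ranges over each basic set Z. *)
Definition struct_const (gT : finGroupType) (X Y : {set gT}) (z : gT) : nat :=
  #|[set xy : gT * gT | (xy.1 \in X) && (xy.2 \in Y) && (xy.1 * xy.2 == z)]|.

Definition is_Sring (gT : finGroupType) (G : {group gT}) (P : {set {set gT}}) : Prop :=
  [/\ partition P G,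
      [set 1] \in P,
      (forall X, X \in P -> X^-1 \in P) &
      (forall X Y Z, X \in P -> Y \in P -> Z \in P ->
         forall z z', z \in Z -> z' \in Z ->
           struct_const X Y z = struct_const X Y z')].

(* Central: every basic quantity sum X lies in Z(ZG), i.e. every basic set is
   invariant under conjugation by G. *)
Definition Sring_central (gT : finGroupType) (G : {group gT}) (P : {set {set gT}}) : Prop :=
  forall X, X \in P -> forall g, g \in G -> X :^ g = X.

Definition Sring_subgroup (gT : finGroupType) (G : {group gT}) (P : {set {set gT}})
    (H : {group gT}) : Prop :=
  H \subset G /\ (forall X, X \in P -> X \subset H \/ [disjoint X & H]).

Definition Sring_primitive (gT : finGroupType) (G : {group gT}) (P : {set {set gT}}) : Prop :=
  forall H : {group gT}, Sring_subgroup G P H -> H :=: 1 \/ H :=: G.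

(* Basic sets of the trivial S-ring Ze + Z(sum G): {e} and G \ {e}
   (the latter only when nonempty). *)
Definition trivial_partition (gT : finGroupType) (G : {group gT}) : {set {set gT}} :=
  [set X in [set [set 1]; G^#] | X != set0].

(* Basic sets of Z(ZG) are the conjugacy classes. *)
Definition generalized_B_group (gT : finGroupType) (G : {group gT}) : Prop :=
  forall P : {set {set gT}},
    is_Sring G P -> Sring_central G P ->
    P != classes G -> P != trivial_partition G ->
    ~ Sring_primitive G P.

(* Main.v *)
Require Import Defs.
From mathcomp Require Import all_boot all_order all_fingroup all_solvable.
From mathcomp Require Import vcharacter zify.
Set Implicit Arguments. Unset Strict Implicit. Unset Printing Implicit Defensive.
Local Open Scope group_scope.

Lemma sc_card (gT : finGroupType) (X Y : {set gT}) z :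
  struct_const X Y z = #|[set x in X | x^-1 * z \in Y]|.
Proof.
rewrite /struct_const.
have -> : [set xy : gT * gT | (xy.1 \in X) && (xy.2 \in Y) && (xy.1 * xy.2 == z)]
   = (fun x => (x, x^-1 * z)) @: [set x in X | x^-1 * z \in Y].
  apply/setP=> [[a b]]; rewrite !inE /=; apply/idP/imsetP.
    case/andP=> /andP[aX bY] /eqP abz; exists a; first by rewrite inE aX -abz mulKg.
    by rewrite -abz mulKg.
  case=> x; rewrite inE => /andP[xX xY] [-> ->]; by rewrite xX xY mulKVg eqxx.
by rewrite card_imset // => x y [].
Qed.

Lemma card_sep_eq (T : finType) (A : {set T}) (p : pred T) :
  (#|[set x in A | p x]| == #|A|) = [forall x in A, p x].
Proof.
have sub : [set x in A | p x] \subset A by apply/subsetP=> x; rewrite inE => /andP[].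
rewrite (subset_leqif_card sub).2; apply/subsetP/forall_inP.
  by move=> H x xA; have := H x xA; rewrite inE => /andP[].
by move=> H x xA; rewrite inE xA H.
Qed.

Lemma sc_inv (gT : finGroupType) (X : {set gT}) g :
  struct_const X X^-1 g = #|[set x in X | g^-1 * x \in X]|.
Proof.
rewrite /struct_const.
have -> : [set xy : gT * gT | (xy.1 \in X) && (xy.2 \in X^-1) && (xy.1 * xy.2 == g)]
   = (fun x => (x, x^-1 * g)) @: [set x in X | g^-1 * x \in X].
  apply/setP=> [[a b]]; rewrite !inE /=; apply/idP/imsetP.
    case/andP=> /andP[aX bY] /eqP abz; exists a; last by rewrite -abz mulKg.
    by rewrite inE aX -abz invMg -mulgA mulVg mulg1.
  case=> x; rewrite inE => /andP[xX xY] [-> ->].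
  by rewrite xX invMg invgK xY mulKVg eqxx.
by rewrite card_imset // => x y [].
Qed.


Lemma arithB a b cn s1 s2 s xd nN xx : b <= cn -> s1 <= a -> s2 <= xd ->
  xd + nN = xx -> s1 + s2 = s -> a + b = xx -> cn = s -> nN <= a.*2.
Proof. rewrite -addnn; lia. Qed.

Lemma arithC a b u nN d : nN <= a.*2 -> nN <= b.*2 -> u = a + b ->
  nN = true + d -> u <= d -> False.
Proof. rewrite -!addnn /=; lia. Qed.

Lemma camina_B (gT : finGroupType) (G N : {group gT}) :
  N <| G -> N :!=: 1 -> N \proper G ->
  (forall x m, x \in G -> x \notin N -> m \in N -> x * m \in x ^: G) ->
  generalized_B_group G.
Proof.
move=> nsNG ntN prNG cam P [partP P1 Pinv Pc] cenP _ ntrivP prim.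
have [/eqP covP tiP set0P] := and3P partP.
have sGX : forall X, X \in P -> X \subset G.
  by move=> X XP; rewrite -covP; apply: bigcup_sup.
have blk : forall g, g \in G -> pblock P g \in P /\ g \in pblock P g.
  by move=> g gG; rewrite pblock_mem ?mem_pblock covP.
have uniqb : forall X Y g, X \in P -> Y \in P -> g \in X -> g \in Y -> X = Y.
  by move=> X Y g XP YP gX gY; rewrite -(def_pblock tiP XP gX) (def_pblock tiP YP gY).
have sNG := normal_sub nsNG.
have nNG := normal_norm nsNG.
have camX : forall X x m, X \in P -> x \in X -> x \notin N -> m \in N ->
    x * m \in X /\ m * x \in X.
  move=> X x m XP xX xN mN; have xG := subsetP (sGX X XP) x xX.
  have H1 : forall m', m' \in N -> x * m' \in X.
    move=> m' m'N; have /imsetP[g gG ->] := cam x m' xG xN m'N.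
    by rewrite -(cenP X XP g gG) memJ_conjg.
  split; first exact: H1.
  have -> : m * x = x * (m ^ x) by rewrite conjgE !mulgA mulgV mul1g.
  by apply: H1; rewrite memJ_norm // (subsetP nNG).
have meetN : forall Z, Z \in P -> exists2 n, n \in N & n \in Z.
  move=> X XP; case: (pickP [pred n | (n \in N) && (n \in X)]) => [n /andP[]|dis].
    by exists n.
  exfalso.
  have disX : forall x, x \in X -> x \notin N.
    by move=> x xX; apply/negP=> xN; have := dis x; rewrite /= xN xX.
  pose R := [set g in G | [forall x in X, g^-1 * x \in X]].
  have Rsc : forall g, g \in G -> (g \in R) = (struct_const X X^-1 g == #|X|).
    by move=> g gG; rewrite sc_inv card_sep_eq inE gG.
  have Rgs : group_set R.
    apply/group_setP; split.
      by rewrite inE group1; apply/forall_inP=> x xX; rewrite invg1 mul1g.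
    move=> a b; rewrite !inE => /andP[aG /forall_inP aR] /andP[bG /forall_inP bR].
    rewrite groupM //; apply/forall_inP=> x xX.
    by rewrite invMg -mulgA; apply: bR; apply: aR.
  pose RG := Group Rgs.
  have sub : Sring_subgroup G P RG.
    split.
      by apply/subsetP=> g; rewrite inE => /andP[].
    move=> Z ZP; case: (pickP [pred z | (z \in Z) && (z \in R)]) => [z /andP[zZ zR]|dZ].
      left; apply/subsetP=> z' z'Z.
      have z'G := subsetP (sGX Z ZP) z' z'Z; have zG := subsetP (sGX Z ZP) z zZ.
      rewrite /= Rsc // -(Pc X X^-1 Z XP (Pinv X XP) ZP z z' zZ z'Z) -Rsc //.
    right; apply/pred0P=> z; exact: dZ z.
  case: (prim RG sub) => [R1|RGG].
    have: N \subset RG.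
      apply/subsetP=> n nN; rewrite /= inE (subsetP sNG n nN) /=.
      apply/forall_inP=> x xX.
      by have [_] := camX X x n^-1 XP xX (disX x xX) (groupVr nN).
    by rewrite R1 => /trivgP NN; rewrite NN eqxx in ntN.
  have /set0Pn[x xX] : X != set0 by apply: contraNneq set0P => <-.
  have : x \in RG by rewrite RGG (subsetP (sGX X XP)).
  rewrite /= inE => /andP[_ /forall_inP/(_ x xX)]; rewrite mulVg => X1.
  by have := disX 1 X1; rewrite group1.
have bigA : forall X y, X \in P -> y \in X -> y \notin N -> #|N| <= (#|X :&: N|).*2.
  move=> X y XP yX yN; have yG := subsetP (sGX X XP) y yX.
  have [ZP yZ] := blk y yG; have [n nN nZ] := meetN _ ZP.
  have eqc := Pc X X^-1 _ XP (Pinv X XP) ZP n y nZ yZ.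
  rewrite !sc_inv in eqc.
  have lb : #|X :\: N| <= #|[set x in X | n^-1 * x \in X]|.
    apply: subset_leq_card; apply/subsetP=> x; rewrite !inE => /andP[xN xX].
    by rewrite xX; have [_] := camX X x n^-1 XP xX xN (groupVr nN).
  set S := [set x in X | y^-1 * x \in X] in eqc.
  have syN : y *: N \subset X.
    apply/subsetP=> x /lcosetP[m mN ->]; by have [] := camX X y m XP yX yN mN.
  have c1 : #|S :&: (y *: N)| <= #|X :&: N|.
    rewrite -(card_lcoset _ y^-1); apply: subset_leq_card; apply/subsetP=> z.
    case/lcosetP=> x; rewrite !inE => /andP[/andP[xX yxX] /lcosetP[m mN xe]] ->.
    by rewrite yxX xe mulKg mN.
  have c2 : #|S :\: (y *: N)| <= #|X :\: (y *: N)|.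
    apply: subset_leq_card; apply: setSD; apply/subsetP=> x; by rewrite inE => /andP[].
  have c3 : #|X :\: (y *: N)| + #|N| = #|X|.
    by rewrite cardsD (setIidPr syN) card_lcoset subnK // -(card_lcoset N y) subset_leq_card.
  have c4 := cardsID (y *: N) S.
  have c5 := cardsID N X.
  move: lb c1 c2 c3 c4 c5 eqc; clear.
  exact: arithB.
have n1X : forall Z z, Z \in P -> z \in Z -> z \notin N -> 1 \notin Z.
  move=> Z z ZP zZ zN; apply/negP=> Z1.
  have eZ := uniqb _ _ 1 ZP P1 Z1 (set11 1).
  by rewrite eZ inE in zZ; rewrite (eqP zZ) group1 in zN.
have oneW : forall X Y x y, X \in P -> Y \in P -> x \in X -> x \notin N ->
    y \in Y -> y \notin N -> X = Y.
  move=> X Y x y XP YP xX xN yY yN; case: (eqVneq X Y) => // neXY; exfalso.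
  have dXY : [disjoint X & Y] := trivIsetP tiP X Y XP YP neXY.
  have hX := bigA X x XP xX xN; have hY := bigA Y y YP yY yN.
  have sub : (X :&: N) :|: (Y :&: N) \subset N :\ 1.
    apply/subsetP=> z; rewrite !inE => /orP[] /andP[zX zN]; rewrite zN andbT;
      apply: contraTneq zX => ->; [exact: n1X xX xN| exact: n1X yY yN].
  have i0 : #|(X :&: N) :&: (Y :&: N)| = 0.
    apply/eqP; rewrite cards_eq0 -subset0 -(disjoint_setI0 dXY).
    by apply: setISS; apply: subsetIl.
  have cu := cardsU (X :&: N) (Y :&: N); rewrite i0 subn0 in cu.
  have c1 := cardsD1 1 N; rewrite group1 in c1.
  have c2 := subset_leq_card sub.
  move: hX hY cu c1 c2; clear; exact: arithC.
have [_ [y0 y0G y0N]] := properP prNG.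
have [WP y0W] := blk y0 y0G; set W := pblock P y0 in WP y0W.
have isW : forall X x, X \in P -> x \in X -> x \notin N -> X = W.
  by move=> X x XP xX xN; apply: oneW XP WP xX xN y0W y0N.
have outW : forall g, g \in G -> g \notin N -> g \in W.
  by move=> g gG gN; have [gP gb] := blk g gG; rewrite -(isW _ g gP gb gN).
have notW1 : 1 \notin W := n1X W y0 WP y0W y0N.
pose L := N :\: W.
have Wb : forall y n, y \in L -> n \in W :&: N -> y^-1 * n \in W.
  move=> y n; rewrite !inE => /andP[yW yN] /andP[nW nN].
  have yG := subsetP sNG y yN.
  have [YP yY] := blk y yG; set Y := pblock P y in YP yY.
  have YN : Y \subset N.
    apply/subsetP=> u uY; apply/negPn/negP=> uN.
    have eY := isW Y u YP uY uN; rewrite eY in yY; by rewrite yY in yW.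
  have eq := Pc Y W W YP WP WP y0 n y0W nW; rewrite !sc_card in eq.
  have full : #|[set u in Y | u^-1 * y0 \in W]| = #|Y|.
    apply/eqP; rewrite card_sep_eq; apply/forall_inP=> u uY.
    have uN := subsetP YN u uY.
    apply: outW; first by rewrite groupM // groupV (subsetP sNG).
    apply: contra y0N => h; by rewrite -(mulKVg u y0) groupM.
  have /eqP := etrans (esym eq) full; rewrite card_sep_eq => /forall_inP.
  by apply.
have key : forall y y', y \in L -> y' \in L -> y^-1 * y' \in L.
  move=> y y' yL y'L.
  have yN : y \in N by move: yL; rewrite inE => /andP[].
  have y'N : y' \in N by move: y'L; rewrite inE => /andP[].
  rewrite inE groupM ?groupV // andbT; apply/negP=> hW.
  have sI : y^-1 *: (W :&: N) \subset W :&: N.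
    apply/subsetP=> z /lcosetP[n nWN ->].
    rewrite inE Wb //= groupM ?groupV //.
    by move: nWN; rewrite inE => /andP[].
  have eI : y^-1 *: (W :&: N) = W :&: N.
    by apply/eqP; rewrite eqEcard sI card_lcoset leqnn.
  have : y^-1 * y' \in y^-1 *: (W :&: N) by rewrite eI inE hW groupM ?groupV.
  rewrite mem_lcoset invgK mulKVg inE => /andP[y'W _].
  by move: y'L; rewrite inE y'W.
have L1 : 1 \in L by rewrite inE notW1 group1.
have Lgs : group_set L.
  apply/group_setP; split=> // a b aL bL.
  have aiL : a^-1 \in L by have := key a 1 aL L1; rewrite mulg1.
  by have := key a^-1 b aiL bL; rewrite invgK.
pose LG := Group Lgs.
have subL : Sring_subgroup G P LG.
  split.
    by apply: subset_trans sNG; apply: subsetDl.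
  move=> X XP; case: (eqVneq X W) => [->|neXW].
    by right; apply/pred0P=> z; rewrite /= inE; case: (z \in W).
  left; apply/subsetP=> x xX; rewrite /= inE.
  apply/andP; split.
    by apply/negP=> xW; rewrite (uniqb _ _ _ XP WP xX xW) eqxx in neXW.
  by apply/negPn/negP=> xN; rewrite (isW _ _ XP xX xN) eqxx in neXW.
case: (prim LG subL) => [LG1|LGG]; last first.
  by have := subsetP (subsetDl N W) y0; rewrite -[N :\: W]/(gval LG) LGG => /(_ y0G); rewrite (negPf y0N).
have WG : W = G^#.
  apply/setP=> g; rewrite !inE.
  apply/idP/idP.
    move=> gW; rewrite (subsetP (sGX W WP)) // andbT.
    by apply: contraNneq notW1 => <-.
  case/andP=> g1 gG; case gN: (g \in N); last by apply: outW; rewrite ?gN.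
  apply/negPn/negP=> gW.
  have : g \in LG by rewrite /= inE gW gN.
  by rewrite LG1 inE (negPf g1).
move/negP: ntrivP; apply; apply/eqP/setP=> X; rewrite /trivial_partition !inE.
apply/idP/idP.
  move=> XP; have XnE : X != set0 by apply: contraNneq set0P => <-.
  rewrite XnE andbT; case: (eqVneq X W) => [->|neXW]; first by rewrite WG eqxx orbT.
  have /set0Pn[x xX] := XnE.
  have xL : x \in LG.
    rewrite /= inE; apply/andP; split.
      by apply/negP=> xW; rewrite (uniqb _ _ _ XP WP xX xW) eqxx in neXW.
    by apply/negPn/negP=> xN; rewrite (isW _ _ XP xX xN) eqxx in neXW.
  move: xL; rewrite LG1 inE => /eqP x1; subst x.
  by rewrite (uniqb _ _ 1 XP P1 xX (set11 1)) eqxx.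
by case/andP=> /orP[] /eqP -> _ //; rewrite -WG.
Qed.
Lemma extra_cam (gT : finGroupType) (G : {group gT}) : extraspecial G ->
  (forall x m, x \in G -> x \notin 'Z(G) -> m \in 'Z(G) -> x * m \in x ^: G).
Proof.
move=> [[_ defG'] pZ] x m xG xZ mZ.
have cz : forall g, g \in G -> [~ x, g] \in 'Z(G).
  by move=> g gG; rewrite -defG' derg1 mem_commg.
have zfix : forall z g, z \in 'Z(G) -> g \in G -> z ^ g = z.
  move=> z g /subcentP[_ cG] gG; apply/conjg_fixP; apply/commgP; exact: cG.
pose I := [set [~ x, g] | g in G].
have IZ : I \subset 'Z(G) by apply/subsetP=> _ /imsetP[g gG ->]; exact: cz.
have I1 : 1 \in I by apply/imsetP; exists 1; rewrite ?group1 ?commg1.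
have ntI : #|I| != 1%N.
  apply/negP=> /eqP cI.
  have eI : I = [set 1].
    by apply/eqP; rewrite eq_sym eqEcard sub1set I1 cards1 cI.
  suff : x \in 'Z(G) by rewrite (negPf xZ).
  apply/subcentP; split=> // y yG; apply/commgP.
  have : [~ x, y] \in I by apply/imsetP; exists y.
  by rewrite eI inE.
have Igs : group_set I.
  apply/group_setP; split=> // _ _ /imsetP[g gG ->] /imsetP[h hG ->].
  apply/imsetP; exists (h * g); first by rewrite groupM.
  by rewrite commgMJ zfix ?cz.
pose IG := Group Igs.
have IZg : IG \subset 'Z(G) by [].
have cI := (prime_nt_dvdP pZ ntI (cardSg IZg)).
have eIZ : I = 'Z(G) by apply/eqP; rewrite eqEcard IZ /= cI.
have : m \in I by rewrite eIZ.
case/imsetP=> g gG ->; rewrite commgEl mulKVg; exact: memJ_class.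
Qed.

Lemma frob_cam (gT : finGroupType) (G K H : {group gT}) : [Frobenius G = K ><| H] ->
  (forall x m, x \in G -> x \notin K -> m \in K -> x * m \in x ^: G).
Proof.
move=> frobK x m xG xK mK.
have [defG ntK ntH prK prH] := Frobenius_context frobK.
have [nsKG _ _ _ _] := sdprod_context defG.
pose f := fun k => [~ x, k].
have fK : {in K, forall k, f k \in K}.
  move=> k kK; rewrite /f commgEr groupM // memJ_norm ?groupV //.
  exact: (subsetP (normal_norm nsKG)).
have finj : {in K &, injective f}.
  move=> k k' kK k'K; rewrite /f !commgEl => /mulgI e.
  case: (eqVneq (k * k'^-1) 1) => [z1|nz]; first by apply/eqP; rewrite eq_mulgV1 z1.
  have zK : k * k'^-1 \in K^# by rewrite !inE nz groupM ?groupV.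
  have : x \in 'C_G[k * k'^-1].
    rewrite inE xG; apply/cent1P; apply/commgP; apply/conjg_fixP.
    by rewrite conjgM e -conjgM mulgV conjg1.
  by move/(subsetP (Frobenius_cent1_ker frobK zK)); rewrite (negPf xK).
have imK : f @: K = K.
  apply/eqP; rewrite eqEcard card_in_imset // leqnn andbT.
  by apply/subsetP=> _ /imsetP[k kK ->]; exact: fK.
have : m \in f @: K by rewrite imK.
case/imsetP=> k kK ->; rewrite /f commgEl mulKVg; apply: memJ_class.
exact: (subsetP (normal_sub nsKG)).
Qed.

Theorem corollary1p6 (gT : finGroupType) (G : {group gT}) :
  ([Frobenius G]%g \/ extraspecial G) -> generalized_B_group G.
Proof.
case=> [frob | esG].
  have [H frobH] := existsP frob.
  have [K frobK] := Frobenius_kernel_exists frobH.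
  have [defG ntK _ prK _] := Frobenius_context frobK.
  have [nsKG _ _ _ _] := sdprod_context defG.
  exact: (camina_B nsKG ntK prK (frob_cam frobK)).
apply: (camina_B (center_normal G) _ _ (extra_cam esG)).
  by rewrite -cardG_gt1 prime_gt1 // esG.2.
rewrite properEneq center_sub andbT.
apply: contra (extraspecial_nonabelian esG) => /eqP ZG; exact/center_idP.
Qed.
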